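(* Let $B$ be a proper $\mathbb{C}(z)$-submodule of $\mathbb{C}(z)\otimes\mathbb{C}^r$ and $B^*=B\cap(\mathbb{C}[z]\otimes\mathbb{C}^r)$. A vectorial $pg$-sequence $u_{\omega,h}$ is orthogonal to $B$ if and only if it is orthogonal to $B^*$.
   Context: $\mathbb{C}(z)$ is the Laurent polynomial ring in $z_1,\dots,z_d$ and $\mathbb{C}[z]$ the polynomial ring. A vectorial $pg$-sequence is $u_{\omega,h}:\mathbb{Z}^d\to\mathbb{C}^r$, $k\mapsto\omega^kh(k)$, with $\omega\in(\mathbb{C}\setminus\{0\})^d$, $\omega^k=\prod_i\omega_i^{k_i}$, $h\in\mathbb{C}[z]\otimes\mathbb{C}^r$. For $p=\sum_ka_kz^k\in\mathbb{C}(z)\otimes\mathbb{C}^r$ and $u:\mathbb{Z}^d\to\mathbb{C}^r$, $\langle p,u\rangle=\sum_ka_k\cdot u(k)$; $u$ is orthogonal to a set $S$ if $\langle p,u\rangle=0$ for all $p\in S$. *)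

(* Defs.v *)
From HB Require Import structures.
From mathcomp Require Import all_boot all_order all_algebra.
From mathcomp Require Import finmap.
From mathcomp Require Import complex.
From mathcomp Require Import reals.
From mathcomp Require mpoly.
Set Implicit Arguments. Unset Strict Implicit. Unset Printing Implicit Defensive.
Import Order.TTheory GRing.Theory Num.Theory.
Local Open Scope ring_scope.

(* An element of C(z) (x) C^r (Laurent polynomial vector) sum_k a_k z^k is
   represented by its finitely supported coefficient map k |-> a_k,
   i.e. an element of {fsfun 'rV[int]_d -> 'rV[C]_r with 0}. *)

Definition LVec (C : nzRingType) (d r : nat) :=
  {fsfun 'rV[int]_d -> 'rV[C]_r with 0}.

Definition is_polyvec (C : nzRingType) (d r : nat) (p : LVec C d r) : Prop :=
  forall k, k \in finsupp p -> forall j : 'I_d, (0 <= k 0 j)%R.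

(* B is a C(z)-submodule of C(z) (x) C^r: contains 0, closed under addition,
   under complex scalars and under multiplication by monomials z^m, m in Z^d
   (together these give closure under multiplication by Laurent polynomials). *)
Definition is_Lsubmodule (C : nzRingType) (d r : nat) (B : LVec C d r -> Prop) : Prop :=
  [/\ (forall p : LVec C d r, (forall k, p k = 0) -> B p),
      (forall p q s : LVec C d r, B p -> B q -> (forall k, s k = p k + q k) -> B s),
      (forall (c : C) (p s : LVec C d r), B p -> (forall k, s k = c *: p k) -> B s) &
      (forall (m : 'rV[int]_d) (p s : LVec C d r), B p -> (forall k, s k = p (k - m)) -> B s)].

Definition proper_set (C : nzRingType) (d r : nat) (B : LVec C d r -> Prop) : Prop :=
  exists p : LVec C d r, ~ B p.

Definition polypart (C : nzRingType) (d r : nat) (B : LVec C d r -> Prop) : LVec C d r -> Prop :=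
  fun p => B p /\ is_polyvec p.

Definition pairing (C : nzRingType) (d r : nat) (p : LVec C d r)
  (u : 'rV[int]_d -> 'rV[C]_r) : C :=
  \sum_(k <- finsupp p) \sum_(i < r) p k 0 i * u k 0 i.

Definition orthogonal_to (C : nzRingType) (d r : nat) (u : 'rV[int]_d -> 'rV[C]_r)
  (S : LVec C d r -> Prop) : Prop :=
  forall p, S p -> pairing p u = 0.

Definition monom_pow (C : unitRingType) (d : nat) (w : 'rV[C]_d) (k : 'rV[int]_d) : C :=
  \prod_(i < d) w 0 i ^ k 0 i.

Definition pg_seq (C : comUnitRingType) (d r : nat) (w : 'rV[C]_d)
  (h : 'I_r -> mpoly.mpoly d C) : 'rV[int]_d -> 'rV[C]_r :=
  fun k => \row_(i < r) (monom_pow w k *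
            mpoly.meval (fun j : 'I_d => (k 0 j)%:~R) (h i)).

(* Main.v *)
Require Import Defs.
From HB Require Import structures.
From mathcomp Require Import all_boot all_order all_algebra.
From mathcomp Require Import finmap complex reals.
From mathcomp Require mpoly.
From Stdlib Require Import FunctionalExtensionality.
From mathcomp Require Import ring.
Import Order.TTheory GRing.Theory Num.Theory.
Local Open Scope ring_scope.
Section Diff.
Set Implicit Arguments. Unset Strict Implicit.
Variables (C : fieldType) (d : nat).
Implicit Types (f g : 'rV[int]_d -> C).

Definition ej (j : 'I_d) : 'rV[int]_d := delta_mx 0 j.
Definition Dj (j : 'I_d) f : 'rV[int]_d -> C := fun m => f (m + ej j) - f m.
Definition Kill (j : 'I_d) f := exists N, forall m, iter N (Dj j) f m = 0.

Lemma iterD_add j n f g :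
  iter n (Dj j) (fun m => f m + g m) = fun m => iter n (Dj j) f m + iter n (Dj j) g m.
Proof.
elim: n => //= n ->; apply: functional_extensionality => m; rewrite /Dj.
by rewrite addrACA opprD.
Qed.

Lemma iter_zero j n f : (forall m, f m = 0) -> forall m, iter n (Dj j) f m = 0.
Proof.
move=> H; elim: n => //= n IH m; by rewrite /Dj !IH subrr.
Qed.

Lemma Kill_ext j f g : Kill j f -> (forall m, f m = g m) -> Kill j g.
Proof.
by move=> Hk /functional_extensionality <-.
Qed.

Lemma Kill0 j : Kill j (fun _ => 0).
Proof. by exists 0%N. Qed.

Lemma Kill_add j f g : Kill j f -> Kill j g -> Kill j (fun m => f m + g m).
Proof.
move=> [N1 H1] [N2 H2]; exists (N1 + N2)%N => m.
rewrite iterD_add.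
have -> : iter (N1 + N2) (Dj j) f m = 0.
  by rewrite addnC iterD; apply: iter_zero.
by rewrite add0r iterD; apply: iter_zero.
Qed.

Lemma Kill_sum j (I : Type) (s : seq I) (F : I -> 'rV[int]_d -> C) :
  (forall x, Kill j (F x)) -> Kill j (fun m => \sum_(x <- s) F x m).
Proof.
move=> H; elim: s => [|x s IH].
  by apply: Kill_ext (Kill0 j) _ => m; rewrite big_nil.
apply: Kill_ext (Kill_add (H x) IH) _ => m; by rewrite big_cons.
Qed.

Definition Delta (q : {poly C}) := q \Po ('X + 1%:P) - q.

Lemma size_Delta (q : {poly C}) n : (size q <= n.+1)%N -> (size (Delta q) <= n)%N.
Proof.
move=> Hs; have [->|q0] := eqVneq q 0.
  by rewrite /Delta comp_poly0 subrr size_poly0.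
have sc : size (q \Po ('X + 1%:P)) = size q by rewrite size_comp_poly2 // size_XaddC.
have lc : lead_coef (q \Po ('X + 1%:P)) = lead_coef q.
  by rewrite lead_coef_comp ?size_XaddC // lead_coefXaddC expr1n mulr1.
apply/leq_sizeP => i Hi; rewrite /Delta coefB.
have [Hlt|Hge] := ltnP i (size q).-1.
  exfalso; move: Hlt; rewrite ltnNge; move: Hi Hs; case: (size q) => //= s' Hi Hs.
  by rewrite (leq_trans _ Hi).
have [Heq|Hgt] := eqVneq i (size q).-1.
  by rewrite Heq -{1}sc -!lead_coefE lc subrr.
have Hi2 : (size q <= i)%N.
  by move: Hge Hgt; case: (size q) => //= s' H1 H2; rewrite ltn_neqAle eq_sym H2 H1.
by rewrite !nth_default ?subrr // sc.
Qed.

Lemma Kill_basic_n j (A : 'rV[int]_d -> C) n : forall (q : {poly C}),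
  (forall m, A (m + ej j) = A m) -> (size q <= n)%N ->
  forall m, iter n (Dj j) (fun m => A m * q.[(m 0 j)%:~R]) m = 0.
Proof.
elim: n => [|n IH] q HA Hs.
  by move: Hs; rewrite leqn0 size_poly_eq0 => /eqP -> m /=; rewrite horner0 mulr0.
rewrite iterSr.
have -> : Dj j (fun m => A m * q.[(m 0 j)%:~R]) = fun m => A m * (Delta q).[(m 0 j)%:~R].
  apply: functional_extensionality => m; rewrite /Dj /Delta HA hornerD hornerN horner_comp.
  rewrite !hornerE /ej !mxE eqxx rmorphD /= mulrBr.
  by rewrite eqxx.
by apply: IH => //; apply: size_Delta.
Qed.

Lemma Kill_basic j (A : 'rV[int]_d -> C) (q : {poly C}) :
  (forall m, A (m + ej j) = A m) ->
  Kill j (fun m => A m * q.[(m 0 j)%:~R]).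
Proof. by move=> HA; exists (size q); apply: Kill_basic_n. Qed.

Definition van f (a : 'rV[int]_d) := forall m : 'rV[int]_d, (forall l, a 0 l <= m 0 l) -> f m = 0.

Lemma van_step j f a : Kill j f -> van f a -> van f (a - ej j).
Proof.
move=> [N HN] Hv.
have Sa : forall m : 'rV[int]_d, (forall l, (a - ej j) 0 l <= m 0 l) -> forall l, a 0 l <= (m + ej j) 0 l.
  move=> m Hm l; move: (Hm l); rewrite !mxE /=.
  by case: (j == l) => /=; rewrite ?subr0 ?addr0 // lerBlDr.
have H1 : forall n, van (iter n (Dj j) f) a.
  elim=> [|n IH] m Hm; first exact: Hv.
  have E2 : iter n (Dj j) f (m + ej j) = 0.
    apply: IH => l; by rewrite /ej !mxE eqxx /= (le_trans (Hm l)) // lerDl ler0n.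
  have -> : iter n.+1 (Dj j) f m = Dj j (iter n (Dj j) f) m by [].
  rewrite /Dj E2 (IH m Hm) subrr.
  done.
have H2 : forall t, van (iter (N - t) (Dj j) f) (a - ej j).
  elim=> [|t IH] m Hm; first by rewrite subn0; exact: HN.
  have [Hle|Hlt] := leqP N t.
    have E1 : (N - t.+1 = 0)%N by apply/eqP; rewrite subn_eq0 (leq_trans Hle).
    have E0 : (N - t = 0)%N by apply/eqP; rewrite subn_eq0.
    by rewrite E1; move: (IH m Hm); rewrite E0.
  have E : (N - t = (N - t.+1).+1)%N by rewrite subnS prednK // subn_gt0.
  have := IH m Hm; rewrite E.
  have -> : iter (N - t.+1)%N.+1 (Dj j) f m = Dj j (iter (N - t.+1)%N (Dj j) f) m by [].
  rewrite /Dj (H1 (N - t.+1)%N (m + ej j) (Sa m Hm)) sub0r => /eqP.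
  by rewrite oppr_eq0 => /eqP.
by move=> m Hm; move: (H2 N m Hm); rewrite subnn.
Qed.

Lemma van_seq (s : seq 'I_d) f a : (forall j, Kill j f) -> van f a ->
  van f (a - \sum_(j <- s) ej j).
Proof.
move=> HK; elim: s a => [|j s IH] a Hv; first by rewrite big_nil subr0.
rewrite big_cons opprD addrA addrAC; apply: (van_step (HK j)); exact: IH.
Qed.

Lemma van_zero f (A : nat) : (forall j, Kill j f) ->
  (forall m : 'rV[int]_d, (forall l, A%:Z <= m 0 l) -> f m = 0) -> f 0 = 0.
Proof.
move=> HK Hv.
have step : forall c : int, van f (const_mx c) -> van f (const_mx (c - 1)).
  move=> c Hc; have := van_seq (s:=index_enum 'I_d) HK Hc.
  have -> : const_mx c - \sum_(j <- index_enum 'I_d) ej j = const_mx (c - 1) :> 'rV[int]_d.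
    apply/rowP => l; rewrite !mxE summxE (bigD1 l) //= big1 ?addr0.
      by rewrite /ej mxE !eqxx.
    by move=> i Hi; rewrite /ej mxE eq_sym (negPf Hi) andbF.
  done.
have : forall n : nat, van f (const_mx (A%:Z - n%:Z)).
  elim=> [|n IH]; first by move=> m Hm; apply: Hv => l; move: (Hm l); rewrite mxE subr0.
  have E : (A%:Z - n%:Z - 1 = A%:Z - (n.+1)%:Z :> int) by rewrite intS opprD addrA addrAC.
  by have := step _ IH; rewrite E.
move/(_ A) => H; apply: H => l; by rewrite !mxE subrr.
Qed.
End Diff.

Theorem lemma4p8 (R : realType) (d r : nat) (B : LVec R[i] d r -> Prop)
  (HB : is_Lsubmodule B) (Hprop : proper_set B)
  (w : 'rV[R[i]]_d) (Hw : forall j : 'I_d, w 0 j != 0)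
  (h : 'I_r -> mpoly.mpoly d R[i]) :
  orthogonal_to (pg_seq w h) B <-> orthogonal_to (pg_seq w h) (polypart B).
Proof.
case: HB => H0 Hadd Hsc Hsh.
split; first by move=> Ho p [Bp _]; exact: Ho.
move=> Ho p Bp.
pose A := (\sum_(k <- finsupp p) \sum_(l < d) `|k ord0 l|%N)%N.
pose G := fun m : 'rV[int]_d => \sum_(k <- finsupp p) \sum_(i < r)
   p k 0 i * (monom_pow w k * mpoly.meval (fun l => ((k + m) 0 l)%:~R) (h i)).
have G0 : G 0 = pairing p (pg_seq w h).
  rewrite /G /pairing; apply: eq_bigr => k _; apply: eq_bigr => i _.
  by rewrite /pg_seq mxE addr0.
have Gvan : forall m : 'rV[int]_d, (forall l, A%:Z <= m 0 l) -> G m = 0.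
  move=> m Hm.
  pose D := [fset (k + m)%R | k in finsupp p]%fset.
  pose s : LVec R[i] d r := [fsfun k in D => p (k - m)].
  have sE : forall k, s k = p (k - m).
    move=> k; rewrite /s fsfunE; case: ifP => // kD.
    apply/esym/eqP; apply: contraFT kD => Hk.
    apply/imfsetP; exists (k - m); last by rewrite subrK.
    by rewrite mem_finsupp.
  have Bs : B s := Hsh m p s Bp sE.
  have Ps : is_polyvec s.
    move=> k; rewrite mem_finsupp sE => Hk j.
    have Hk' : k - m \in finsupp p by rewrite mem_finsupp.
    have Hb : (`|((k - m)%R) ord0 j|%N <= A)%N.
      rewrite /A (bigD1_seq (k - m)) ?fset_uniq //=.
      apply: leq_trans (leq_addr _ _).
      by rewrite (bigD1 j) //= leq_addr.
    have -> : k 0 j = (k - m) 0 j + m 0 j by rewrite !mxE subrK.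
    apply: le_trans (lerD (lexx _) (Hm j)).
    move: Hb; rewrite -lez_nat abszE => Hb.
    have := lexx `|(k - m) 0 j|; rewrite ler_norml => /andP[H1 _].
    by rewrite -(addNr `|(k - m) 0 j|) lerD.
  have mp : forall k, monom_pow w (k + m) = monom_pow w k * monom_pow w m.
    move=> k; rewrite /monom_pow -big_split; apply: eq_bigr => l _.
    by rewrite mxE expfzDr.
  have Ps_eq : pairing s (pg_seq w h) = monom_pow w m * G m.
    rewrite /pairing (big_fset_incl _ (A := finsupp s) (B := D)).
    - rewrite big_imfset /=; last by move=> x y _ _ /addIr.
      rewrite /G mulr_sumr; apply: eq_bigr => k _.
      rewrite mulr_sumr; apply: eq_bigr => i _.
      rewrite sE addrK /pg_seq mxE mp.
      ring.
    - apply/fsubsetP => k; rewrite mem_finsupp sE => Hk; apply/imfsetP.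
      by exists (k - m); [rewrite mem_finsupp | rewrite subrK].
    - move=> k _; rewrite mem_finsupp negbK => /eqP Hk.
      by apply: big1 => i _; rewrite Hk mxE mul0r.
  have := Ho s (conj Bs Ps); rewrite Ps_eq => /eqP; rewrite mulf_eq0 => /orP[|/eqP //].
  rewrite /monom_pow => /eqP H; exfalso; move: H; apply/eqP/prodf_neq0 => l _.
  by rewrite expfz_eq0 negb_and Hw orbT.
have GK : forall j, Kill j G.
  move=> j; rewrite /G.
  apply: Kill_sum => k; apply: Kill_sum => i.
  pose c e := p k 0 i * monom_pow w k * mpoly.mcoeff e (h i).
  apply: (Kill_ext (f := fun m => \sum_(e <- mpoly.msupp (h i))
     (c e * \prod_l ((k + m) 0 l)%:~R ^+ mpoly.fun_of_multinom e l))); last first.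
    move=> m; rewrite mpoly.mevalE !mulr_sumr; apply: eq_bigr => e _; rewrite /c !mulrA.
    done.
  apply: Kill_sum => e.
  apply: (Kill_ext (Kill_basic (j:=j) (A := fun m => c e * \prod_(l | l != j)
     ((k + m) 0 l)%:~R ^+ mpoly.fun_of_multinom e l)
     (('X + ((k 0 j)%:~R)%:P) ^+ mpoly.fun_of_multinom e j) _)).
    move=> m; congr (_ * _); apply: eq_bigr => l Hl.
    by rewrite /ej !mxE eqxx (negPf Hl) /= addr0.
  move=> m; rewrite [in RHS](bigD1 j) //=.
  rewrite -mulrA; congr (_ * _); rewrite mulrC; congr (_ * _).
  by rewrite !hornerE !mxE rmorphD /= (addrC (m 0 j)%:~R).
by rewrite -G0; exact: van_zero GK Gvan.
Qed.
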